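(* Let $(\varphi_t)_{t\ge0}$ be a family of nonnegative measures on $\mathcal B(\mathbb R_+)$ satisfying $$\forall t\ge0,\ \forall A\in\mathcal B(\mathbb R_+),\ \forall\varepsilon>0,\ \exists\eta\in(0,1):\ |z|,|z'|<\eta\Rightarrow|\varphi_{t+z}(A+z')-\varphi_t(A+z')|<\varepsilon .$$ Then: (1) for almost every $t\ge0$ and all $0\le s<r$, $$\lim_{\Delta t\searrow0}\frac1{\Delta t}\int_0^{\Delta t}\big|\varphi_{t+\Delta t-u}((s+u,r+u])-\varphi_t((s+u,r+u])\big|\,du=0;$$ (2) for almost every $t\ge0$ and all $0\le s<r$, $$\lim_{\Delta t\searrow0}\frac1{\Delta t}\int_0^{\Delta t}\varphi_{t+\Delta t-u}((s+u,r+u])\,du=\varphi_t((s,r]).$$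
   Context: $A+z'$ denotes the translate $\{a+z':a\in A\}$. *)

(* Defs.v *)
From HB Require Import structures.
From mathcomp Require Import all_boot all_order all_algebra.
From mathcomp Require Import all_classical all_reals all_analysis.
Set Implicit Arguments. Unset Strict Implicit. Unset Printing Implicit Defensive.

(* Main.v *)
Require Import Defs.
From HB Require Import structures.
From mathcomp Require Import all_boot all_order all_algebra.
From mathcomp Require Import all_classical all_reals all_analysis.
From mathcomp Require Import lra.
Import Order.TTheory GRing.Theory Num.Theory.
Local Open Scope classical_set_scope.
Local Open Scope ring_scope.

Lemma le_int_nm (R : realType) d (T : measurableType d) (mu : {measure set T -> \bar R})
  (D : set T) (f g : T -> \bar R) :
  (forall x, D x -> (0 <= f x)%E) -> (forall x, D x -> (f x <= g x)%E) ->
  (\int[mu]_(x in D) f x <= \int[mu]_(x in D) g x)%E.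
Proof.
move=> f0 fg.
have g0 : forall x, D x -> (0 <= g x)%E by move=> x Dx; exact: le_trans (f0 x Dx) (fg x Dx).
rewrite (ge0_integralE mu f0) (ge0_integralE mu g0) /=.
apply: ereal_sup_le => _ [h /= hf <-]; exists h => //= x.
apply: le_trans (hf x) _; rewrite /patch; case: ifP => // /set_mem Dx; exact: fg.
Qed.

Lemma int_cst_itv (R : realType) (c dt : R) : 0 < dt ->
  (\int[lebesgue_measure]_(u in [set` `[0, dt]%R]) (c%:E) = (c * dt)%:E)%E.
Proof.
move=> dt0.
have := integral_cst lebesgue_measure (measurable_itv `[(0:R), dt]%R) c%:E.
rewrite /= => ->; rewrite lebesgue_measure_itv /=; rewrite lte_fin dt0 oppr0 adde0.
by rewrite -EFinM.
Qed.

Lemma avg (R : realType) (F : R -> R -> \bar R) (l : R) :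
  (forall dt u, (0 <= F dt u)%E) ->
  (forall e, 0 < e -> exists eta, 0 < eta /\ forall dt u, 0 < dt -> dt < eta ->
      0 <= u <= dt -> ((l - e)%:E <= F dt u <= (l + e)%:E)%E) ->
  ((fun dt => (dt^-1)%:E * \int[lebesgue_measure]_(u in [set` `[0, dt]%R]) F dt u)%E
     @ 0^'+ --> l%:E).
Proof.
move=> F0 HF.
have Hn eta : 0 < eta -> \forall dt \near 0^'+, 0 < dt < eta.
  move=> eta0; near=> dt; apply/andP; split; near: dt;
    [exact: nbhs_right_gt | exact: nbhs_right_lt].
have B e : 0 < e -> \forall dt \near 0^'+,
   ((l - e)%:E <= (dt^-1)%:E * \int[lebesgue_measure]_(u in [set` `[0, dt]%R]) F dt u
     <= (l + e)%:E)%E.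
  move=> e0; have [eta [eta0 Heta]] := HF e e0.
  near=> dt.
  have /andP[dt0 dteta] : 0 < dt < eta by near: dt; exact: Hn.
  have dti : (0 <= (dt^-1)%:E)%E by rewrite lee_fin invr_ge0 ltW.
  apply/andP; split.
  - apply: (@le_trans _ _ ((dt^-1)%:E * (Num.max 0 (l - e) * dt)%:E)%E).
      rewrite -EFinM lee_fin mulrCA mulVf ?gt_eqF // mulr1.
      by rewrite le_max lexx orbT.
    apply: lee_wpmul2l => //; rewrite -int_cst_itv //.
    apply: le_int_nm => [x _|x]; first by rewrite lee_fin le_max lexx.
    rewrite /= in_itv /= => /andP[x0 xdt].
    have /andP[h1 _] := Heta dt x dt0 dteta (introT andP (conj x0 xdt)).
    rewrite /Order.max; case: ifP => _ //; exact: F0.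
  - apply: (@le_trans _ _ ((dt^-1)%:E * ((l + e) * dt)%:E)%E); last first.
      by rewrite -EFinM lee_fin mulrCA mulVf ?gt_eqF // mulr1.
    apply: lee_wpmul2l => //; rewrite -int_cst_itv //.
    apply: le_int_nm => [x _|x]; first exact: F0.
    rewrite /= in_itv /= => /andP[x0 xdt].
    by have /andP[_ h2] := Heta dt x dt0 dteta (introT andP (conj x0 xdt)).
apply/fine_cvgP; split.
  near=> dt.
  have : ((l - 1)%:E <= (dt^-1)%:E * \int[lebesgue_measure]_(u in [set` `[0, dt]%R]) F dt u
     <= (l + 1)%:E)%E by near: dt; exact: B.
  move: (_ * _)%E => y; case: y => [x||] //=; rewrite ?leey ?leNye ?lee_fin //=.
apply/cvgrPdist_le => e e0.
near=> dt.
have : ((l - e)%:E <= (dt^-1)%:E * \int[lebesgue_measure]_(u in [set` `[0, dt]%R]) F dt u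
     <= (l + e)%:E)%E by near: dt; exact: B.
rewrite /=.
move: (_ * _)%E => y; case: y => [x||] //=; rewrite ?leey ?leNye ?andbF //.
rewrite !lee_fin => /andP[h1 h2]; rewrite ler_norml; apply/andP; split; lra.
Unshelve. all: by end_near.
Qed.
Lemma shift_itv (R : realType) (s r u : R) :
  [set (a + u)%R | a in [set` `]s, r]]] = [set` `]s + u, r + u]].
Proof.
apply/seteqP; split=> x /=.
- case=> a /=; rewrite !in_itv /= => /andP[h1 h2] <-; apply/andP; split; lra.
- rewrite in_itv /= => /andP[h1 h2]; exists (x - u); last by rewrite subrK.
  rewrite /= in_itv /=; apply/andP; split; lra.
Qed.

Section cum.
Variable (R : realType) (mu : {measure set R -> \bar R}).
Hypothesis fin : forall S, measurable S -> mu S \is a fin_num.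
Let c (y : R) := fine (mu [set` `]-oo, y]]).

Lemma c_itv a b : a <= b -> mu [set` `]a, b]] = (c b - c a)%:E.
Proof.
move=> ab.
have E : [set` `]-oo, b]] = [set` `]-oo, a]] `|` [set` `]a, b]].
  rewrite predeqE => x; rewrite /= !in_itv /=; split.
  - move=> xb; have [xa|ax] := leP x a; [left|right] => //; apply/andP; split; lra.
  - case=> [xa|/andP[h1 h2]]; lra.
have D : [set` `]-oo, a]] `&` [set` `]a, b]] = set0.
  rewrite predeqE => x; rewrite /= !in_itv /=; split => // -[h1 /andP[h2 h3]]; lra.
rewrite /c E measureU //; try exact: measurable_itv.
rewrite fineD ?fin // addrC addKr fineK ?fin //; exact: measurable_itv.
Qed.

Lemma c_le a b : a <= b -> c a <= c b.
Proof.
move=> ab; rewrite /c.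
have h1 := fin _ (@measurable_itv R `]-oo, a]); have h2 := fin _ (@measurable_itv R `]-oo, b]).
apply: fine_le => //.
apply: le_measure; rewrite ?inE //; move=> x /=; rewrite !in_itv /= => h; lra.
Qed.

Lemma c_rc x e : 0 < e -> exists eta, 0 < eta /\ forall u, 0 <= u < eta -> c (x + u) <= c x + e.
Proof.
move=> e0.
pose Fn (n : nat) := [set` `]-oo, x + n.+1%:R^-1]].
have Eb : \bigcap_n Fn n = [set` `]-oo, x]].
  rewrite predeqE => y; split.
  - move=> hy; rewrite /= in_itv /=; rewrite leNgt; apply/negP => xy.
    have [k hk] := ltr_add_invr xy.
    have := hy k I; rewrite /Fn /= in_itv /=; move=> h; move: (lt_le_trans hk h); by rewrite ltxx.
  - rewrite /= ?in_itv /= => yx n _; rewrite /Fn /= ?in_itv /=.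
    by apply: (le_trans yx); rewrite lerDl invr_ge0.
have hc : mu \o Fn @ \oo --> mu [set` `]-oo, x]].
  rewrite -Eb; apply: nonincreasing_cvg_mu.
  - by rewrite -ge0_fin_numE ?measure_ge0 //; apply: fin; exact: measurable_itv.
  - by move=> n; exact: measurable_itv.
  - by rewrite Eb; exact: measurable_itv.
  - move=> m n mn; apply/subsetPset => y; rewrite /Fn /= !in_itv /= => /le_trans; apply.
    by rewrite lerD2l lef_pV2 ?posrE // ler_nat.
rewrite -[mu _]fineK ?fin // in hc.
have /fine_cvgP[_ hc2] := hc.
have [N _ HN] := (proj1 (cvgrPdist_le _ _) hc2) e e0.
exists N.+1%:R^-1; split; first by rewrite invr_gt0.
move=> u /andP[u0 uN].
apply: (@le_trans _ _ (c (x + N.+1%:R^-1))); first by apply: c_le; rewrite lerD2l ltW.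
have := HN N (leqnn N); rewrite /= /c /Fn => h.
move: h; rewrite ler_norml => /andP[h1 h2]; lra.
Qed.
End cum.

Lemma fin_of_cont (R : realType) (phi : R -> {measure set R -> \bar R})
  (phi_supp : forall t : R, 0 <= t -> phi t [set` `]-oo, 0[] = 0%E)
  (phi_cont : forall t : R, 0 <= t ->
     forall A : set R, measurable A -> A `<=` [set` `[0, +oo[] ->
     forall eps : R, 0 < eps ->
     exists eta : R, 0 < eta < 1 /\
       forall z z' : R, `|z| < eta -> `|z'| < eta -> 0 <= t + z ->
         (`| phi (t + z)%R [set (a + z')%R | a in A] - phi t [set (a + z')%R | a in A] |
            < eps%:E)%E) t : 0 <= t ->
  forall S, measurable S -> phi t S \is a fin_num.
Proof.
move=> t0.
set P := [set` `[(0:R), +oo[].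
have [eta [/andP[eta0 _] H]] := phi_cont t t0 P (measurable_itv _) (fun x h => h) 1 ltr01.
have := H 0 0; rewrite normr0 addr0 => /(_ eta0 eta0 t0).
have -> : [set (a + 0)%R | a in P] = P.
  by apply/seteqP; split => [x [a Pa <-]|x Px]; [rewrite addr0 | exists x => //; rewrite addr0].
move=> hP.
have hf : phi t P \is a fin_num by move: hP; case: (phi t P).
have hf' : (phi t P < +oo)%E by rewrite -ge0_fin_numE ?measure_ge0.
have PT : phi t setT \is a fin_num.
  rewrite ge0_fin_numE ?measure_ge0 //.
  have -> : [set: R] = [set` `]-oo, 0[] `|` P.
    rewrite predeqE => x; split => // _; rewrite /P /= !in_itv /= ?andbT.
    by have [h|h] := ltP x 0; [left|right].
  apply: (le_lt_trans (measureU2 _ _ _)); try exact: measurable_itv.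
  rewrite [X in (X + _)%E](_ : _ = 0%E); last exact: phi_supp. rewrite add0e; exact: hf'.
move=> S mS; rewrite ge0_fin_numE ?measure_ge0 //.
apply: (le_lt_trans (le_measure _ _ _ (subsetT S))); rewrite ?inE //.
by rewrite -ge0_fin_numE ?measure_ge0.
Qed.

Theorem propositionA1 (R : realType) (phi : R -> {measure set R -> \bar R})
  (phi_supp : forall t : R, 0 <= t -> phi t [set` `]-oo, 0[] = 0%E)
  (phi_cont : forall t : R, 0 <= t ->
     forall A : set R, measurable A -> A `<=` [set` `[0, +oo[] ->
     forall eps : R, 0 < eps ->
     exists eta : R, 0 < eta < 1 /\
       forall z z' : R, `|z| < eta -> `|z'| < eta -> 0 <= t + z ->
         (`| phi (t + z)%R [set (a + z')%R | a in A] - phi t [set (a + z')%R | a in A] |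
            < eps%:E)%E) :
  {ae lebesgue_measure, forall t : R, 0 <= t ->
     forall s r : R, 0 <= s -> s < r ->
       ((fun dt : R => (dt^-1)%:E *
           \int[lebesgue_measure]_(u in [set` `[0, dt]%R])
              `| phi (t + dt - u)%R [set` `]s + u, r + u]%R] - phi t [set` `]s + u, r + u]%R] |)%E
          @ 0^'+ --> 0%E)}
  /\
  {ae lebesgue_measure, forall t : R, 0 <= t ->
     forall s r : R, 0 <= s -> s < r ->
       ((fun dt : R => (dt^-1)%:E *
           \int[lebesgue_measure]_(u in [set` `[0, dt]%R]) phi (t + dt - u)%R [set` `]s + u, r + u]%R])%E
          @ 0^'+ --> phi t [set` `]s, r]%R])}.
Proof.
have sub s r : 0 <= s -> [set` `]s, r]] `<=` [set` `[(0:R), +oo[].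
  move=> s0 x; rewrite /= !in_itv /= andbT => /andP[h1 h2]; lra.
split; apply: aeW => t t0 s r s0 sr.
- apply: avg => [dt u|e e0]; first exact: abse_ge0.
  have [eta [/andP[eta0 _] H]] := phi_cont t t0 _ (measurable_itv `]s, r]) (sub s r s0) e e0.
  exists eta; split => // dt u dt0 dteta /andP[u0 udt].
  have := H (dt - u) u; rewrite shift_itv addrA.
  rewrite ger0_norm ?subr_ge0 // ger0_norm //.
  move=> /(_ ltac:(lra) ltac:(lra) ltac:(lra)) h.
  apply/andP; split; last by rewrite add0r ltW.
  apply: le_trans (abse_ge0 _); rewrite lee_fin; lra.
- have fin := @fin_of_cont R phi phi_supp phi_cont t t0.
  rewrite (@c_itv _ _ fin _ _ (ltW sr)).
  apply: avg => [dt u|e e0]; first exact: measure_ge0.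
  have e20 : 0 < e / 2 by rewrite divr_gt0.
  have e40 : 0 < e / 4 by rewrite divr_gt0.
  have [eta1 [/andP[eta10 _] H1]] := phi_cont t t0 _ (measurable_itv `]s, r]) (sub s r s0) _ e20.
  have [eta2 [eta20 H2]] := @c_rc _ _ fin s _ e40.
  have [eta3 [eta30 H3]] := @c_rc _ _ fin r _ e40.
  exists (Num.min eta1 (Num.min eta2 eta3)); split.
    by rewrite !lt_min eta10 eta20 eta30.
  move=> dt u dt0; rewrite !lt_min => /and3P[d1 d2 d3] /andP[u0 udt].
  have := H1 (dt - u) u; rewrite shift_itv addrA.
  rewrite ger0_norm ?subr_ge0 // ger0_norm //.
  move=> /(_ ltac:(lra) ltac:(lra) ltac:(lra)).
  have hs1 := @c_le _ _ fin _ _ (ltac:(lra) : s <= s + u).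
  have hr1 := @c_le _ _ fin _ _ (ltac:(lra) : r <= r + u).
  have hs2 := H2 u ltac:(lra).
  have hr2 := H3 u ltac:(lra).
  rewrite (@c_itv _ _ fin _ _ (ltac:(lra) : s + u <= r + u)).
  move: hs1 hr1 hs2 hr2.
  set a1 := fine _; set a2 := fine _; set a3 := fine _; set a4 := fine _.
  move=> hs1 hr1 hs2 hr2.
  case: (phi _ _) => [y||] //=.
  rewrite lte_fin ltr_norml => /andP[h1 h2].
  rewrite !lee_fin; apply/andP; split; lra.
Qed.
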